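(* Let $\Phi=(A;\{E_i\}_{i=0}^d;A^*;\{E^*_i\}_{i=0}^d)$ be a tridiagonal system on $V$ with $d\ge1$, such that $(A,A^* )$ satisfies the $q$-Serre relations, with $E_iV$ the eigenspace of $A$ for $\theta_i=q^{2i-d}$ and $E^*_iV$ the eigenspace of $A^*$ for $\theta^*_i=q^{d-2i}$. Let $\{U_i\}_{i=0}^d$ be its split decomposition, $K:V\to V$ the linear map acting on $U_i$ as $q^{d-2i}I$, $t$ a scalar, and $B^*=tA^*+(1-t)K$. Then $B^*$ is diagonalizable with eigenvalues $\theta^*_0,\dots,\theta^*_d$, and for $0\le i\le d$ the $\theta^*_i$-eigenspace of $B^*$ has dimension $\dim U_i$.
   Context: $\mathcal K$ is an algebraically closed field; $V$ is a nonzero finite-dimensional vector space over $\mathcal K$; $q\in\mathcal K$ is nonzero and not a root of unity; $[3]_q=q^2+1+q^{-2}$. The $q$-Serre relations for $(X,Y)$: $X^3Y-[3]_qX^2YX+[3]_qXYX^2-YX^3=0$ and $Y^3X-[3]_qY^2XY+[3]_qYXY^2-XY^3=0$. Primitive idempotent of a diagonalizable $X$ for eigenvalue $\lambda_i$: $\prod_{j\ne i}\frac{X-\lambda_jI}{\lambda_i-\lambda_j}$. A tridiagonal system on $V$ is a sequence $(A;\{E_i\}_{i=0}^d;A^*;\{E^*_i\}_{i=0}^d)$ with $A,A^*$ diagonalizable, $\{E_i\}$, $\{E^*_i\}$ orderings of their primitive idempotents, $E_iA^*E_j=0$ and $E^*_iAE^*_j=0$ when $|i-j|>1$, and no subspaces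 other than $0,V$ invariant under both $A$ and $A^*$. Split decomposition: $U_i=(E^*_0V+\cdots+E^*_iV)\cap(E_iV+\cdots+E_dV)$; known: $V=U_0\oplus\cdots\oplus U_d$ with each $U_i\ne0$, $(A-\theta_iI)U_i\subseteq U_{i+1}$, $(A^*-\theta^*_iI)U_i\subseteq U_{i-1}$ ($U_{-1}=U_{d+1}=0$). *)

(* Defs.v *)
(* V = 'rV[F]_n (row vectors), linear maps = 'M[F]_n acting on
   the right (v |-> v *m A); subspaces = row spaces of matrices (%MS). *)
From HB Require Import structures.
From mathcomp Require Import all_boot all_order all_algebra.
Set Implicit Arguments. Unset Strict Implicit. Unset Printing Implicit Defensive.
Import Order.TTheory GRing.Theory Num.Theory.
Local Open Scope ring_scope.

Section TD.
Variable F : fieldType.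

Definition qint3 (q : F) : F := q ^+ 2 + 1 + q ^- 2.

Definition qSerre n (q : F) (X Y : 'M[F]_n) : Prop :=
  X *m X *m X *m Y - qint3 q *: (X *m X *m Y *m X)
    + qint3 q *: (X *m Y *m X *m X) - Y *m X *m X *m X = 0 /\
  Y *m Y *m Y *m X - qint3 q *: (Y *m Y *m X *m Y)
    + qint3 q *: (Y *m X *m Y *m Y) - X *m Y *m Y *m Y = 0.

Definition qtheta (q : F) (d i : nat) : F := q ^ ((2 * i)%:Z - d%:Z).
Definition qthetas (q : F) (d i : nat) : F := q ^ (d%:Z - (2 * i)%:Z).

Definition prim_idem n (X : 'M[F]_n) (th : nat -> F) (d i : nat) : 'M[F]_n :=
  \prod_(j < d.+1 | (j : nat) != i) ((th i - th j)^-1 *: (X - (th j)%:M)).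

(* (A; {E_i}; A*; {E*_i}) is a tridiagonal system on V, where E_i is the
   primitive idempotent of A for th i and E*_i that of A* for ths i, i.e.
   th 0..th d are the (distinct) eigenvalues of A in the order given by the
   system, and similarly for A*. *)
Definition tridiagonal_system n (d : nat) (A As : 'M[F]_n) (th ths : nat -> F)
  : Prop :=
  [/\ diagonalizable A, diagonalizable As,
      {in gtn d.+1 &, injective th} /\ {in gtn d.+1 &, injective ths},
      (forall a, eigenvalue A a <-> exists2 i, (i <= d)%N & a = th i) /\
      (forall a, eigenvalue As a <-> exists2 i, (i <= d)%N & a = ths i) &
      (forall i j, (i <= d)%N -> (j <= d)%N -> (i.+1 < j)%N || (j.+1 < i)%N ->
         prim_idem A th d i *m As *m prim_idem A th d j = 0) /\
      (forall i j, (i <= d)%N -> (j <= d)%N -> (i.+1 < j)%N || (j.+1 < i)%N ->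
         prim_idem As ths d i *m A *m prim_idem As ths d j = 0) /\
      (forall W : 'M[F]_n, (W *m A <= W)%MS -> (W *m As <= W)%MS ->
         (W == (0 : 'M[F]_n))%MS \/ (W == 1%:M)%MS)].

Definition split_comp n (d : nat) (A As : 'M[F]_n) (th ths : nat -> F)
  (i : nat) : 'M[F]_n :=
  ((\sum_(j < d.+1 | (j <= i)%N) prim_idem As ths d j)
   :&: (\sum_(j < d.+1 | (i <= j)%N) prim_idem A th d j))%MS.

End TD.

(* Main.v *)
Require Import Defs.
From HB Require Import structures.
From mathcomp Require Import all_boot all_order all_algebra.
From mathcomp Require Import zify.
Set Implicit Arguments. Unset Strict Implicit. Unset Printing Implicit Defensive.
Import Order.TTheory GRing.Theory Num.Theory.
Local Open Scope ring_scope.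

Section Util.
Variables (F : fieldType) (n : nat).

Lemma rowext m (W : 'M_(m, n)) (M N : 'M[F]_n) :
  (forall v : 'rV_n, (v <= W)%MS -> v *m M = v *m N) ->
  forall p (B : 'M_(p, n)), (B <= W)%MS -> B *m M = B *m N.
Proof.
move=> H p B sBW; apply/row_matrixP => i; rewrite !row_mul; apply: H.
exact: submx_trans (row_sub i B) sBW.
Qed.

Lemma sumext (d : nat) (W : nat -> 'M[F]_n) (M N : 'M[F]_n) :
  (forall i, (i <= d)%N -> forall v : 'rV_n, (v <= W i)%MS -> v *m M = v *m N) ->
  (1%:M <= \sum_(i < d.+1) W i)%MS -> M = N.
Proof.
move=> H h1.
suff key: forall p (B : 'M_(p, n)), (B <= \sum_(i < d.+1) W i)%MS -> B *m M = B *m N.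
  by rewrite -[M]mul1mx -[N]mul1mx; apply: key.
move=> p B /sub_sumsmxP [u ->].
rewrite !mulmx_suml; apply: eq_bigr => i _; rewrite -!mulmxA; congr (_ *m _).
apply: (rowext _ (submx_refl (W i))) => v; apply: H; rewrite -ltnS; exact: ltn_ord.
Qed.

Lemma vprod (v : 'rV[F]_n) I (r : seq I) (P : pred I) (f : I -> 'M[F]_n) (g : I -> F) :
  (forall j, P j -> v *m f j = g j *: v) ->
  v *m \prod_(j <- r | P j) f j = (\prod_(j <- r | P j) g j) *: v.
Proof.
move=> H; elim: r => [|j r IH]; first by rewrite !big_nil mulmx1 scale1r.
rewrite !big_cons; case: ifP => Pj //.
by rewrite -mulmxE mulmxA H // -scalemxAl IH scalerA.
Qed.


Lemma sum_leq_eq k (f g : 'I_k -> nat) :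
  (forall i, (f i <= g i)%N) -> (\sum_(i < k) g i <= \sum_(i < k) f i)%N ->
  forall i, f i = g i.
Proof.
move=> fg H i; apply/eqP; rewrite eqn_leq fg /=.
move: H; rewrite (bigD1 i) //= [X in (_ <= X)%N](bigD1 i) //=.
have: (\sum_(j < k | j != i) f j <= \sum_(j < k | j != i) g j)%N by apply: leq_sum.
set a := (\sum_(j < k | j != i) f j)%N; set b := (\sum_(j < k | j != i) g j)%N.
move: (fg i); lia.
Qed.

Section Fam.
Variables (M : 'M[F]_n) (d : nat) (W : nat -> 'M[F]_n) (lam : nat -> F).
Hypothesis hW : forall i, (i <= d)%N -> forall v : 'rV_n, (v <= W i)%MS -> v *m M = lam i *: v.
Hypothesis hS : (1%:M <= \sum_(i < d.+1) W i)%MS.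
Hypothesis hinj : {in gtn d.+1 &, injective lam}.

Lemma fam_sub i : (i <= d)%N -> (W i <= eigenspace M (lam i))%MS.
Proof.
move=> hi; apply/eigenspaceP; apply/row_matrixP => j.
by rewrite row_mul linearZ /=; apply: hW => //; exact: row_sub.
Qed.

Lemma fam_ann : \prod_(j < d.+1) (M - (lam j)%:M) = 0.
Proof.
apply: (sumext (d := d) (W := W)) => // i hi v hv.
have ->: v *m \prod_(j < d.+1) (M - (lam j)%:M) =
    (\prod_(j < d.+1) (lam i - lam j)) *: v.
  by apply: vprod => j _; rewrite mulmxBr (hW hi hv) mul_mx_scalar scalerBl.
by rewrite mulmx0 (bigD1 (inord i)) //= inordK ?ltnS // subrr mul0r scale0r.
Qed.

Lemma fam_eigenvalue a : eigenvalue M a -> exists2 i, (i <= d)%N & a = lam i.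
Proof.
case/eigenvalueP => v hv v0.
have: v *m \prod_(j < d.+1) (M - (lam j)%:M) = 0 by rewrite fam_ann mulmx0.
have ->: v *m \prod_(j < d.+1) (M - (lam j)%:M) =
    (\prod_(j < d.+1) (a - lam j)) *: v.
  by apply: vprod => j _; rewrite mulmxBr hv mul_mx_scalar scalerBl.
move/eqP; rewrite scaler_eq0 (negPf v0) orbF prodf_seq_eq0.
case/hasP => j _ /= /eqP /eqP; rewrite subr_eq0 => /eqP ->.
by exists j => //; rewrite -ltnS.
Qed.

Lemma fam_diag : diagonalizable M.
Proof.
apply/diagonalizablePeigen; exists (map lam (index_iota 0 d.+1)).
  rewrite map_inj_in_uniq ?iota_uniq // => x y; rewrite !mem_iota /= => hx hy.
  by apply: hinj.
apply/eqmxP/andP; split; first exact: submx1.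
rewrite big_map big_mkord.
apply: submx_trans hS _; apply: sumsmxS => i _; apply: fam_sub.
by rewrite -ltnS.
Qed.

Lemma fam_rank i : (i <= d)%N -> \rank (eigenspace M (lam i)) = \rank (W i).
Proof.
move=> hi.
have key := @sum_leq_eq d.+1 (fun j => \rank (W j)) (fun j => \rank (eigenspace M (lam j))).
have hi' : (i < d.+1)%N by [].
suff: forall j : 'I_d.+1, \rank (W j) = \rank (eigenspace M (lam j)).
  by move/(_ (Ordinal hi')) => /= ->.
apply: key.
  by move=> j; apply: mxrankS; apply: fam_sub; rewrite -ltnS.
have dx : mxdirect (\sum_(j < d.+1) eigenspace M (lam j)).
  apply: mxdirect_sum_eigenspace => x y _ _ /hinj; rewrite !inE => h.
  by apply: val_inj; apply: h.
move/mxdirectP: dx => /= <-.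
apply: (leq_trans (rank_leq_col _)).
rewrite -{1}(mxrank1 F n); apply: (leq_trans (mxrankS hS)).
exact: (mxrank_sum_leqif _).1.
Qed.

Lemma fam_all (r : nat -> nat) :
  (forall i, (i <= d)%N -> \rank (W i) = r i) -> (forall i, (i <= d)%N -> (0 < r i)%N) ->
  [/\ diagonalizable M,
      (forall a, eigenvalue M a <-> exists2 i, (i <= d)%N & a = lam i) &
      (forall i, (i <= d)%N -> \rank (eigenspace M (lam i)) = r i)].
Proof.
move=> hr hp; have hrk : forall i, (i <= d)%N -> \rank (eigenspace M (lam i)) = r i.
  by move=> i hi; rewrite fam_rank // hr.
split => //; first exact: fam_diag.
move=> a; split; first exact: fam_eigenvalue.
case=> i hi ->; rewrite /eigenvalue -mxrank_eq0 hrk //.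
by rewrite -lt0n hp.
Qed.

End Fam.

Section Idem.
Variables (X : 'M[F]_n) (d : nat) (th : nat -> F).
Hypothesis hdiag : diagonalizable X.
Hypothesis heig : forall a, eigenvalue X a <-> exists2 i, (i <= d)%N & a = th i.
Hypothesis hinj : {in gtn d.+1 &, injective th}.

Local Notation E i := (prim_idem X th d i).
Local Notation Ev i := (eigenspace X (th i)).

Lemma idem_span : (1%:M <= \sum_(i < d.+1) Ev i)%MS.
Proof.
case/diagonalizablePeigen: hdiag => rs _ /eqmxP /andP [_ h1].
apply: submx_trans h1 _; elim: rs => [|r rs IH]; first by rewrite big_nil sub0mx.
rewrite big_cons addsmx_sub IH andbT.
have [/eqP->|nz] := boolP (eigenspace X r == 0); first exact: sub0mx.
have [i hi ->] : exists2 i, (i <= d)%N & r = th i by apply/heig.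
by apply: (sumsmx_sup (Ordinal (hi : (i < d.+1)%N))).
Qed.

Lemma idem_vec k i (v : 'rV_n) : (k <= d)%N -> (i <= d)%N -> (v <= Ev k)%MS ->
  v *m E i = if i == k then v else 0.
Proof.
move=> hk hi /eigenspaceP hv.
have ->: v *m E i = (\prod_(j < d.+1 | (j : nat) != i) ((th i - th j)^-1 * (th k - th j))) *: v.
  apply: vprod => j _; rewrite -scalemxAr mulmxBr hv mul_mx_scalar -scalerBl.
  by rewrite scalerA.
case: eqP => [<-|/eqP ne].
  rewrite big1 ?scale1r // => j hj; rewrite mulVf // subr_eq0.
  apply/eqP => /hinj; rewrite !inE => h; move: hj; rewrite h //.
  by rewrite eqxx.
rewrite (bigD1 (Ordinal (hk : (k < d.+1)%N))) //=.
rewrite (_ : th k - th k = 0) ?subrr // mulr0 mul0r scale0r //.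
by rewrite /= eq_sym.
Qed.

Lemma idem_mat k i m (B : 'M_(m, n)) : (k <= d)%N -> (i <= d)%N -> (B <= Ev k)%MS ->
  B *m E i = if i == k then B else 0.
Proof.
move=> hk hi hB.
have: B *m E i = B *m (if i == k then 1%:M else 0).
  apply: (rowext _ hB) => v hv; rewrite (idem_vec hk hi hv).
  by case: (i == k); rewrite ?mulmx1 ?mulmx0.
by case: (i == k); rewrite ?mulmx1 ?mulmx0.
Qed.

Lemma idem_sum : \sum_(i < d.+1) E i = 1%:M.
Proof.
apply: (sumext (d := d) (W := fun k => Ev k)) idem_span => k hk v hv.
rewrite mulmx_sumr mulmx1 (bigD1 (Ordinal (hk : (k < d.+1)%N))) //=.
rewrite (idem_vec hk hk hv) eqxx big1 ?addr0 // => j hj.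
rewrite (idem_vec hk _ hv); last by rewrite -ltnS.
by rewrite ifN //; apply: contra hj => /eqP h; apply/eqP; apply: val_inj.
Qed.

Lemma idem_eig i : (i <= d)%N -> (Ev i :=: E i)%MS.
Proof.
move=> hi; apply/eqmxP/andP; split.
  have h := idem_mat hi hi (submx_refl (Ev i)); rewrite eqxx in h.
  by rewrite -h submxMl.
apply/eigenspaceP.
rewrite -[_ *: E i]mul_scalar_mx.
apply: (sumext (d := d) (W := fun k => Ev k)) idem_span => k hk v hv.
rewrite mulmxA (idem_vec hk hi hv) mulmxA mul_mx_scalar -scalemxAl (idem_vec hk hi hv).
case: eqP => [->|_]; last by rewrite mul0mx scaler0.
by move/eigenspaceP: hv.
Qed.

Lemma idem_tri (Y : 'M[F]_n) :
  (forall i j, (i <= d)%N -> (j <= d)%N -> (i.+1 < j)%N || (j.+1 < i)%N ->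
     E i *m Y *m E j = 0) ->
  forall k, (k <= d)%N ->
  (Ev k *m Y <= \sum_(l < d.+1 | ((l : nat) <= k.+1)%N && (k <= l.+1)%N) Ev l)%MS.
Proof.
move=> hz k hk.
have hB := idem_mat hk hk (submx_refl (Ev k)); rewrite eqxx in hB.
rewrite -hB -[Ev k *m E k *m Y]mulmx1 -idem_sum mulmx_sumr.
apply: summx_sub => l _.
have hl : (l <= d)%N by rewrite -ltnS.
case: (boolP (((l : nat) <= k.+1)%N && (k <= l.+1)%N)) => c.
  apply: submx_trans (submxMl _ _) _; rewrite -(idem_eig hl).
  exact: (sumsmx_sup l c (submx_refl _)).
have z : E k *m Y *m E l = 0 by apply: hz => //; move: c; lia.
have ->: Ev k *m E k *m Y *m E l = Ev k *m (E k *m Y *m E l) by rewrite !mulmxA.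
by rewrite z mulmx0 sub0mx.
Qed.

End Idem.

Lemma rk_eig (X : 'M[F]_n) d (th : nat -> F) (P : pred 'I_d.+1) :
  {in gtn d.+1 &, injective th} ->
  \rank (\sum_(l < d.+1 | P l) eigenspace X (th l)) =
  (\sum_(l < d.+1 | P l) \rank (eigenspace X (th l)))%N.
Proof.
move=> hinj.
have dx : mxdirect (\sum_(l < d.+1 | P l) eigenspace X (th l)).
  apply: mxdirect_sum_eigenspace => x y _ _ /hinj; rewrite !inE => h.
  by apply: val_inj; apply: h.
by move/mxdirectP: dx => /= ->.
Qed.

Lemma n_eig (X : 'M[F]_n) d (th : nat -> F) :
  diagonalizable X ->
  (forall a, eigenvalue X a <-> exists2 i, (i <= d)%N & a = th i) ->
  {in gtn d.+1 &, injective th} ->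
  n = (\sum_(l < d.+1) \rank (eigenspace X (th l)))%N.
Proof.
move=> hd he hi; rewrite -rk_eig //; apply/eqP; rewrite eqn_leq rank_leq_col andbT.
by rewrite -{1}(mxrank1 F n) mxrankS // (idem_span hd he).
Qed.

Lemma sumsM (I : finType) (P : pred I) (B : I -> 'M[F]_n) (M : 'M[F]_n) m (C : 'M[F]_(m, n)) :
  (forall i, P i -> B i *m M <= C)%MS -> ((\sum_(i | P i) B i)%MS *m M <= C)%MS.
Proof. by move=> h; rewrite sumsmxMr; apply/sumsmx_subP. Qed.

Lemma shift_sub m p (U : 'M[F]_(m, n)) (U' : 'M[F]_(p, n)) (M : 'M[F]_n) c :
  (U *m M <= U')%MS -> (U <= U')%MS -> (U *m (M - c%:M) <= U')%MS.
Proof.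
move=> h1 h2; rewrite mulmxBr mul_mx_scalar -scaleNr.
by apply: addmx_sub => //; apply: scalemx_sub.
Qed.

Lemma shift_add m p (U : 'M[F]_(m, n)) (U' : 'M[F]_(p, n)) (M : 'M[F]_n) c :
  (U *m (M - c%:M) <= U')%MS -> (U <= U')%MS -> (U *m M <= U')%MS.
Proof.
move=> h1 h2; rewrite (_ : U *m M = U *m (M - c%:M) + c *: U).
  by apply: addmx_sub => //; apply: scalemx_sub.
by rewrite mulmxBr mul_mx_scalar subrK.
Qed.

Section Split.
Variables (A As : 'M[F]_n) (d : nat) (th ths : nat -> F).
Hypothesis hdA : diagonalizable A.
Hypothesis hdAs : diagonalizable As.
Hypothesis heA : forall a, eigenvalue A a <-> exists2 i, (i <= d)%N & a = th i.
Hypothesis heAs : forall a, eigenvalue As a <-> exists2 i, (i <= d)%N & a = ths i.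
Hypothesis hiA : {in gtn d.+1 &, injective th}.
Hypothesis hiAs : {in gtn d.+1 &, injective ths}.
Hypothesis htA : forall i j, (i <= d)%N -> (j <= d)%N -> (i.+1 < j)%N || (j.+1 < i)%N ->
         prim_idem A th d i *m As *m prim_idem A th d j = 0.
Hypothesis htAs : forall i j, (i <= d)%N -> (j <= d)%N -> (i.+1 < j)%N || (j.+1 < i)%N ->
         prim_idem As ths d i *m A *m prim_idem As ths d j = 0.
Hypothesis hirr : forall W : 'M[F]_n, (W *m A <= W)%MS -> (W *m As <= W)%MS ->
         (W == (0 : 'M[F]_n))%MS \/ (W == 1%:M)%MS.

Local Notation Ev k := (eigenspace A (th k)).
Local Notation Es k := (eigenspace As (ths k)).
Local Notation Eup j := (\sum_(l < d.+1 | (j <= l)%N) Ev l)%MS.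
Local Notation Edn j := (\sum_(l < d.+1 | (l < j)%N) Es l)%MS.

Lemma Eup_mono i j : (i <= j)%N -> (Eup j <= Eup i)%MS.
Proof.
move=> h; apply/sumsmx_subP => l hl; apply: (sumsmx_sup l) => //.
exact: leq_trans h hl.
Qed.

Lemma Edn_mono i j : (i <= j)%N -> (Edn i <= Edn j)%MS.
Proof.
move=> h; apply/sumsmx_subP => l hl; apply: (sumsmx_sup l) => //.
exact: leq_trans hl h.
Qed.

Lemma Eup_out j : (d < j)%N -> Eup j = 0.
Proof.
move=> h; rewrite big_pred0 // => l; apply/negbTE; rewrite -ltnNge.
exact: leq_trans (ltn_ord l) h.
Qed.

Lemma Edn0 : Edn 0 = 0.
Proof. by rewrite big_pred0. Qed.

Lemma Eup_shift j : (Eup j *m (A - (th j)%:M) <= Eup j.+1)%MS.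
Proof.
apply: sumsM => l hl.
have /eigenspaceP h : (Ev l <= Ev l)%MS by [].
rewrite mulmxBr h mul_mx_scalar -scalerBl.
case: (eqVneq (l : nat) j) => [->|ne]; first by rewrite subrr scale0r sub0mx.
apply: scalemx_sub; apply: (sumsmx_sup l) => //.
by rewrite ltn_neqAle eq_sym ne hl.
Qed.

Lemma Eup_A j : (Eup j *m A <= Eup j)%MS.
Proof.
apply: sumsM => l hl.
have /eigenspaceP -> : (Ev l <= Ev l)%MS by [].
by apply: scalemx_sub; apply: (sumsmx_sup l).
Qed.

Lemma Eup_As j : (Eup j.+1 *m As <= Eup j)%MS.
Proof.
apply: sumsM => l hl.
have hl' : (l <= d)%N by rewrite -ltnS.
apply: submx_trans (idem_tri hdA heA hiA htA hl') _.
apply/sumsmx_subP => m /andP [_ hm]; apply: (sumsmx_sup m) => //.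
move: hl hm; lia.
Qed.

Lemma Edn_A j : (Edn j *m A <= Edn j.+1)%MS.
Proof.
apply: sumsM => l hl.
have hl' : (l <= d)%N by rewrite -ltnS.
apply: submx_trans (idem_tri hdAs heAs hiAs htAs hl') _.
apply/sumsmx_subP => m /andP [hm _]; apply: (sumsmx_sup m) => //.
move: hl hm; lia.
Qed.

Lemma Edn_As j : (Edn j.+1 *m (As - (ths j)%:M) <= Edn j)%MS.
Proof.
apply: sumsM => l hl.
have /eigenspaceP h : (Es l <= Es l)%MS by [].
rewrite mulmxBr h mul_mx_scalar -scalerBl.
case: (eqVneq (l : nat) j) => [->|ne]; first by rewrite subrr scale0r sub0mx.
apply: scalemx_sub; apply: (sumsmx_sup l) => //.
by rewrite ltn_neqAle ne -ltnS hl.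
Qed.

Local Notation Y k := (Edn k.+1 :&: Eup k.+1)%MS.
Local Notation S := (\sum_(k < d.+1) Y k)%MS.

Lemma S_A : (S *m A <= S)%MS.
Proof.
apply: sumsM => k _; apply: (shift_add (c := th k.+1)); last first.
  exact: (sumsmx_sup k).
have h : (Y k *m (A - (th k.+1)%:M) <= Y k.+1)%MS.
  rewrite sub_capmx; apply/andP; split.
    apply: submx_trans (submxMr _ (capmxSl _ _)) _.
    by apply: shift_sub; [apply: Edn_A | apply: Edn_mono].
  exact: submx_trans (submxMr _ (capmxSr _ _)) (Eup_shift _).
case: (ltnP k.+1 d.+1) => hk.
  exact: submx_trans h (sumsmx_sup (Ordinal hk) _ (submx_refl _)).
apply: submx_trans h _; apply: submx_trans (capmxSr _ _) _.
by rewrite Eup_out ?sub0mx // leqW.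
Qed.

Lemma S_As : (S *m As <= S)%MS.
Proof.
apply: sumsM => k _; apply: (shift_add (c := ths k)); last first.
  exact: (sumsmx_sup k).
have h : (Y k *m (As - (ths k)%:M) <= Edn k :&: Eup k)%MS.
  rewrite sub_capmx; apply/andP; split.
    exact: submx_trans (submxMr _ (capmxSl _ _)) (Edn_As _).
  apply: submx_trans (submxMr _ (capmxSr _ _)) _.
  by apply: shift_sub; [apply: Eup_As | apply: Eup_mono].
move: h; case: (k : nat) (ltn_ord k) => [|k'] hk h.
  by apply: submx_trans h _; apply: submx_trans (capmxSl _ _) _; rewrite Edn0 sub0mx.
have hk' : (k' < d.+1)%N by apply: ltnW.
exact: submx_trans h (sumsmx_sup (Ordinal hk') _ (submx_refl _)).
Qed.

Lemma rho0 : (0 < \rank (Ev 0))%N.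
Proof.
have : eigenvalue A (th 0) by apply/heA; exists 0%N.
by rewrite lt0n mxrank_eq0.
Qed.

Lemma S_zero : (S <= (0 : 'M[F]_n))%MS.
Proof.
case: (hirr S_A S_As) => /andP [] // _ h1.
have hS : (S <= Eup 1)%MS.
  apply/sumsmx_subP => k _; apply: submx_trans (capmxSr _ _) _.
  exact: Eup_mono.
have := mxrankS (submx_trans h1 hS).
rewrite mxrank1 rk_eig // {1}(n_eig hdA heA hiA) (bigD1 ord0) //=.
rewrite (eq_bigl (fun l : 'I_d.+1 => (1 <= l)%N)); last first.
  by case=> [[|l] ?].
have := rho0; lia.
Qed.

Lemma Ycap k : (Y k <= (0 : 'M[F]_n))%MS.
Proof.
case: (ltnP k d.+1) => hk.
  exact: submx_trans (sumsmx_sup (Ordinal hk) _ (submx_refl _)) S_zero.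
by apply: submx_trans (capmxSr _ _) _; rewrite Eup_out ?sub0mx // leqW.
Qed.

Lemma prefix_le k :
  (\sum_(l < d.+1 | (l < k)%N) \rank (Es l) <= \sum_(l < d.+1 | (l < k)%N) \rank (Ev l))%N.
Proof.
case: k => [|k]; first by rewrite !big_pred0.
have := mxrank_sum_cap (Edn k.+1) (Eup k.+1).
have /eqP -> : \rank (Y k) == 0%N by rewrite mxrank_eq0 -submx0 Ycap.
rewrite !rk_eig //.
have := rank_leq_col (Edn k.+1 + Eup k.+1)%MS.
have hn := n_eig hdA heA hiA.
rewrite (bigID (fun l : 'I_d.+1 => (l < k.+1)%N)) /= in hn.
rewrite [X in (_ + X)%N](eq_bigl (fun l : 'I_d.+1 => (k.+1 <= l)%N)) in hn; last first.
  by move=> l /=; rewrite -leqNgt.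
move=> h1 h2.
set a := (\sum_(l < d.+1 | (l < k.+1)%N) \rank (Ev l))%N in hn *.
set b := (\sum_(l < d.+1 | (k < l)%N) \rank (Ev l))%N in hn h2.
set c := (\sum_(l < d.+1 | (l < k.+1)%N) \rank (Es l))%N in h2 *.
set r := \rank _ in h1 h2.
clearbody a b c r; move: h1 h2 hn; clear; lia.
Qed.

End Split.

Section Full.
Variables (A As : 'M[F]_n) (d : nat) (th ths : nat -> F).
Hypothesis hdA : diagonalizable A.
Hypothesis hdAs : diagonalizable As.
Hypothesis heA : forall a, eigenvalue A a <-> exists2 i, (i <= d)%N & a = th i.
Hypothesis heAs : forall a, eigenvalue As a <-> exists2 i, (i <= d)%N & a = ths i.
Hypothesis hiA : {in gtn d.+1 &, injective th}.
Hypothesis hiAs : {in gtn d.+1 &, injective ths}.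
Hypothesis htA : forall i j, (i <= d)%N -> (j <= d)%N -> (i.+1 < j)%N || (j.+1 < i)%N ->
         prim_idem A th d i *m As *m prim_idem A th d j = 0.
Hypothesis htAs : forall i j, (i <= d)%N -> (j <= d)%N -> (i.+1 < j)%N || (j.+1 < i)%N ->
         prim_idem As ths d i *m A *m prim_idem As ths d j = 0.
Hypothesis hirr : forall W : 'M[F]_n, (W *m A <= W)%MS -> (W *m As <= W)%MS ->
         (W == (0 : 'M[F]_n))%MS \/ (W == 1%:M)%MS.

Local Notation Ev k := (eigenspace A (th k)).
Local Notation Es k := (eigenspace As (ths k)).
Local Notation Eup j := (\sum_(l < d.+1 | (j <= l)%N) Ev l)%MS.
Local Notation Edn j := (\sum_(l < d.+1 | (l < j)%N) Es l)%MS.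
Local Notation U' i := (Edn i.+1 :&: Eup i)%MS.

Lemma pref_eq k :
  (\sum_(l < d.+1 | (l < k)%N) \rank (Es l) = \sum_(l < d.+1 | (l < k)%N) \rank (Ev l))%N.
Proof.
apply/eqP; rewrite eqn_leq (prefix_le hdA hdAs heA heAs hiA hiAs htA htAs hirr).
apply: (prefix_le hdAs hdA heAs heA hiAs hiA htAs htA) => W h1 h2.
exact: hirr.
Qed.

Lemma sum_split (f : nat -> nat) k : (k <= d)%N ->
  (\sum_(l < d.+1 | (l < k.+1)%N) f l = f k + \sum_(l < d.+1 | (l < k)%N) f l)%N.
Proof.
move=> hk; rewrite (bigD1 (Ordinal (hk : (k < d.+1)%N))) //=; congr (_ + _)%N.
apply: eq_bigl => l /=.
by rewrite -val_eqE /= ltnS [RHS]ltn_neqAle andbC.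
Qed.

Lemma rho_eq k : (k <= d)%N -> \rank (Ev k) = \rank (Es k).
Proof.
move=> hk; have h1 := pref_eq k.+1; have h2 := pref_eq k.
have e1 := sum_split (fun l => \rank (Es l)) hk.
have e2 := sum_split (fun l => \rank (Ev l)) hk.
cbv beta in e1; cbv beta in e2; rewrite e1 e2 h2 in h1; lia.
Qed.

Lemma full_k k : (\rank (Edn k + Eup k)%MS = n)%N.
Proof.
apply/eqP; rewrite eqn_leq rank_leq_col /=.
case: k => [|k].
  rewrite big_pred0 // adds0mx (eq_bigl (fun _ => true)) //.
  by rewrite -{1}(mxrank1 F n) mxrankS // (idem_span hdA heA).
have := mxrank_sum_cap (Edn k.+1) (Eup k.+1).
have /eqP -> : \rank (Edn k.+1 :&: Eup k.+1)%MS == 0%N.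
  by rewrite mxrank_eq0 -submx0 (Ycap hdA hdAs heA heAs hiA hiAs htA htAs hirr).
rewrite !rk_eig // addn0 => ->.
have hn := n_eig hdA heA hiA.
rewrite (bigID (fun l : 'I_d.+1 => (l < k.+1)%N)) /= in hn.
rewrite [X in (_ + X)%N](eq_bigl (fun l : 'I_d.+1 => (k.+1 <= l)%N)) in hn; last first.
  by move=> l /=; rewrite -leqNgt.
have := pref_eq k.+1.
set a := (\sum_(l < d.+1 | (l < k.+1)%N) \rank (Ev l))%N in hn *.
set b := (\sum_(l < d.+1 | (k < l)%N) \rank (Ev l))%N in hn *.
set c := (\sum_(l < d.+1 | (l < k.+1)%N) \rank (Es l))%N.
clearbody a b c; move: hn; clear; lia.
Qed.

Lemma full_k' k : (1%:M <= Edn k.+1 + Eup k)%MS.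
Proof.
rewrite sub1mx /row_full; apply/eqP/anti_leq; rewrite rank_leq_col /=.
rewrite -{1}(full_k k.+1); apply: mxrankS; apply: addsmxS => //.
exact: Eup_mono.
Qed.

Lemma rankU i : (i <= d)%N -> \rank (U' i) = \rank (Es i).
Proof.
move=> hi.
have := mxrank_sum_cap (Edn i.+1) (Eup i).
have -> : \rank (Edn i.+1 + Eup i)%MS = n.
  apply/eqP; rewrite eqn_leq rank_leq_col /=.
  by rewrite -{1}(mxrank1 F n) mxrankS // full_k'.
rewrite !rk_eig //.
have h1 := full_k i.+1.
have := mxrank_sum_cap (Edn i.+1) (Eup i.+1).
have /eqP -> : \rank (Edn i.+1 :&: Eup i.+1)%MS == 0%N.
  by rewrite mxrank_eq0 -submx0 (Ycap hdA hdAs heA heAs hiA hiAs htA htAs hirr).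
rewrite h1 !rk_eig //.
have e1 := sum_split (fun l => \rank (Es l)) hi.
cbv beta in e1; rewrite e1.
have -> : (\sum_(l < d.+1 | (i <= l)%N) \rank (Ev l) =
    \rank (Ev i) + \sum_(l < d.+1 | (i.+1 <= l)%N) \rank (Ev l))%N.
  rewrite (bigD1 (Ordinal (hi : (i < d.+1)%N))) //=; congr (_ + _)%N.
  apply: eq_bigl => l /=.
  by rewrite -val_eqE /= [RHS]ltn_neqAle andbC eq_sym.
rewrite (rho_eq hi).
set a := (\sum_(l < d.+1 | _) _)%N; set b := (\sum_(l < d.+1 | _) _)%N.
set c := \rank (U' i).
move=> h2 h3; clearbody a b c; lia.
Qed.

Lemma spanU : (1%:M <= \sum_(i < d.+1) U' i)%MS.
Proof.
suff: forall k, (k <= d)%N -> (Edn k.+1 <= \sum_(i < d.+1 | (i <= k)%N) U' i)%MS.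
  move/(_ d (leqnn d)) => h.
  have e1 : Edn d.+1 = (\sum_(l < d.+1) Es l)%MS by apply: eq_bigl => l; rewrite ltn_ord.
  have e2 : (\sum_(i < d.+1 | (i <= d)%N) U' i = \sum_(i < d.+1) U' i)%MS.
    by apply: eq_bigl => l; rewrite -ltnS ltn_ord.
  rewrite e1 e2 in h; exact: submx_trans (idem_span hdAs heAs) h.
elim => [_|k IH hk].
  apply: (sumsmx_sup ord0) => //; rewrite sub_capmx submx_refl /=.
  apply: submx_trans (submx1 _) _; rewrite (eq_bigl (fun _ => true)) //.
  exact: (idem_span hdA heA).
have hk' : (k.+1 < d.+1)%N by [].
have e := matrix_modl (Eup k.+1) (Edn_mono As d ths (leqnSn k.+1) : (Edn k.+1 <= Edn k.+2)%MS).
have h : (Edn k.+2 <= Edn k.+1 + (Eup k.+1 :&: Edn k.+2))%MS.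
  rewrite e sub_capmx submx_refl andbT.
  apply: submx_trans (submx1 _) _.
  by rewrite sub1mx /row_full full_k.
apply: submx_trans h _; rewrite addsmx_sub; apply/andP; split.
  apply: submx_trans (IH (ltnW hk)) _; apply/sumsmx_subP => i hi.
  by apply: (sumsmx_sup i) => //; apply: leqW.
by apply: (sumsmx_sup (Ordinal hk')) => //; rewrite capmxC.
Qed.

Lemma shiftU i : (U' i.+1 *m (As - (ths i.+1)%:M) <= U' i)%MS.
Proof.
rewrite sub_capmx; apply/andP; split.
  exact: submx_trans (submxMr _ (capmxSl _ _)) (Edn_As As d ths _).
apply: submx_trans (submxMr _ (capmxSr _ _)) _.
apply: shift_sub; first exact: (Eup_As hdA heA hiA htA).
exact: Eup_mono.
Qed.

Lemma shiftU0 : (U' 0 *m (As - (ths 0)%:M) <= (0 : 'M[F]_n))%MS.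
Proof.
apply: submx_trans (submxMr _ (capmxSl _ _)) _.
by apply: submx_trans (Edn_As As d ths _) _; rewrite Edn0 sub0mx.
Qed.

Lemma U_eq i : (i <= d)%N -> (split_comp d A As th ths i :=: U' i)%MS.
Proof.
move=> hi; apply: cap_eqmx.
  apply: eqmx_sums => j _; apply: eqmx_sym; apply: (idem_eig hdAs heAs hiAs).
  by rewrite -ltnS.
apply: eqmx_sums => j _; apply: eqmx_sym; apply: (idem_eig hdA heA hiA).
by rewrite -ltnS.
Qed.

Lemma final (K : 'M[F]_n)
  (hK : forall i : nat, (i <= d)%N -> forall v : 'rV[F]_n,
      (v <= split_comp d A As th ths i)%MS -> v *m K = ths i *: v)
  (t : F) :
  let Bs := t *: As + (1 - t) *: K in
  [/\ diagonalizable Bs,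
      (forall a, eigenvalue Bs a <-> exists2 i, (i <= d)%N & a = ths i) &
      (forall i : nat, (i <= d)%N ->
         \rank (eigenspace Bs (ths i)) = \rank (split_comp d A As th ths i))].
Proof.
move=> Bs.
have hKU : forall i, (i <= d)%N -> forall v : 'rV_n, (v <= U' i)%MS -> v *m K = ths i *: v.
  by move=> i hi v hv; apply: hK => //; rewrite (U_eq hi).
have hpos : forall i, (i <= d)%N -> (0 < \rank (split_comp d A As th ths i))%N.
  move=> i hi; rewrite (U_eq hi) rankU // lt0n mxrank_eq0.
  by have : eigenvalue As (ths i) by apply/heAs; exists i.
case: (eqVneq t 0) => [t0|t0].
  have -> : Bs = K by rewrite /Bs t0 scale0r add0r subr0 scale1r.
  apply: (fam_all hKU spanU hiAs) => // i hi.
  by rewrite (U_eq hi).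
pose P i := prim_idem K ths d i.
have hP : forall k i (v : 'rV_n), (k <= d)%N -> (i <= d)%N -> (v <= U' k)%MS ->
    v *m P i = if i == k then v else 0.
  move=> k i v hk hi hv; apply: (idem_vec hiAs) => //; apply/eigenspaceP; exact: hKU.
have hsum : forall (c : nat -> F) k (v : 'rV_n), (k <= d)%N -> (v <= U' k)%MS ->
    v *m (\sum_(i < d.+1) c i *: P i) = c k *: v.
  move=> c k v hk hv; rewrite mulmx_sumr (bigD1 (Ordinal (hk : (k < d.+1)%N))) //=.
  rewrite -scalemxAr (hP k k v) // eqxx big1 ?addr0 // => j hj.
  rewrite -scalemxAr (hP k j v) //; last by rewrite -ltnS.
  rewrite ifN ?scaler0 //; apply: contra hj => /eqP h; apply/eqP; exact: val_inj.
pose D := \sum_(i < d.+1) t ^+ i *: P i.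
pose D' := \sum_(i < d.+1) t^-1 ^+ i *: P i.
have hDD : D *m D' = 1%:M.
  apply: (sumext (d := d) (W := fun k => U' k)) spanU => k hk v hv.
  rewrite mulmxA (hsum _ k v hk hv) -scalemxAl (hsum _ k v hk hv) scalerA mulmx1 exprVn mulfV ?scale1r //.
  exact: expf_neq0.
have hDu : D \in unitmx by case: (mulmx1_unit hDD).
have hcom : Bs *m D = D *m As.
  apply: (sumext (d := d) (W := fun k => U' k)) spanU => k hk v hv.
  have hvA : v *m As = ths k *: v + v *m (As - (ths k)%:M).
    by rewrite mulmxBr mul_mx_scalar addrC subrK.
  have hvB : v *m Bs = ths k *: v + t *: (v *m (As - (ths k)%:M)).
    rewrite /Bs mulmxDr -!scalemxAr hvA (hKU k hk v hv) scalerDr addrAC -scalerDl.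
    by rewrite [t + _]addrC subrK scale1r.
  have hw : t *: (v *m (As - (ths k)%:M) *m D) = t ^+ k *: (v *m (As - (ths k)%:M)).
    case: k hk hv {hvA hvB} => [|k] hk hv.
      have : (v *m (As - (ths 0)%:M) <= (0 : 'M[F]_n))%MS.
        exact: submx_trans (submxMr _ hv) shiftU0.
      by rewrite submx0 => /eqP ->; rewrite mul0mx !scaler0.
    have hw' : (v *m (As - (ths k.+1)%:M) <= U' k)%MS.
      exact: submx_trans (submxMr _ hv) (shiftU k).
    by rewrite (hsum _ k _ (ltnW hk) hw') scalerA -exprS.
  rewrite mulmxA hvB mulmxDl -scalemxAl (hsum _ k v hk hv) -scalemxAl hw.
  rewrite mulmxA (hsum _ k v hk hv) -scalemxAl hvA scalerDr !scalerA mulrC //.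
have hB : Bs = D *m As *m invmx D by rewrite -hcom mulmxK.
have hW : forall i, (i <= d)%N -> forall v : 'rV_n, (v <= Es i *m invmx D)%MS -> v *m Bs = ths i *: v.
  move=> i hi v /submxP [x ->]; rewrite hB.
  have hE : Es i *m As = ths i *: Es i by apply/eigenspaceP.
  have -> : x *m (Es i *m invmx D) *m (D *m As *m invmx D) = x *m (Es i *m As) *m invmx D.
    by rewrite !mulmxA (mulmxKV hDu).
  by rewrite hE -scalemxAr -scalemxAl mulmxA.
have hS : (1%:M <= \sum_(i < d.+1) (Es i *m invmx D))%MS.
  rewrite -sumsmxMr; apply: submx_trans (submxMr _ (idem_span hdAs heAs)).
  by rewrite mul1mx sub1mx row_full_unit unitmx_inv.
have hr : forall i, (i <= d)%N ->
    \rank (Es i *m invmx D) = \rank (split_comp d A As th ths i).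
  move=> i hi; rewrite mxrankMfree ?row_free_unit ?unitmx_inv //.
  by rewrite (U_eq hi) rankU.
exact: (fam_all hW hS hiAs hr hpos).
Qed.

End Full.

End Util.

Unset Implicit Arguments.
Set Strict Implicit.

Theorem lemma7p6 (F : closedFieldType) (n : nat) (q : F)
  (hn : (0 < n)%N)
  (hq0 : q != 0) (hq : forall m : nat, (0 < m)%N -> q ^+ m != 1)
  (d : nat) (hd : (1 <= d)%N)
  (A As : 'M[F]_n)
  (hTD : tridiagonal_system d A As (qtheta q d) (qthetas q d))
  (hS : qSerre q A As)
  (K : 'M[F]_n)
  (hK : forall i : nat, (i <= d)%N -> forall v : 'rV[F]_n,
      (v <= split_comp d A As (qtheta q d) (qthetas q d) i)%MS ->
      v *m K = qthetas q d i *: v)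
  (t : F) :
  let Bs := t *: As + (1 - t) *: K in
  [/\ diagonalizable Bs,
      (forall a, eigenvalue Bs a <-> exists2 i, (i <= d)%N & a = qthetas q d i) &
      (forall i : nat, (i <= d)%N ->
         \rank (eigenspace Bs (qthetas q d i))
         = \rank (split_comp d A As (qtheta q d) (qthetas q d) i))].
Proof.
move=> Bs.
case: hTD => hdA hdAs [hiA hiAs] [heA heAs] [htA [htAs hirr]].
exact: (final hdA hdAs heA heAs hiA hiAs htA htAs hirr hK t).
Qed.
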